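(* Let $G$ be a clique tree in which every block is a clique on at least $3$ vertices. Let $v$ be a cut vertex of $G$ and let $K_m$ ($m\ge 3$) be a pendant block of $G$ containing $v$. Let $G_1$ be the subgraph of $G$ induced by $V(G)\setminus (V(K_m)\setminus\{v\})$, so that $G=G_1\oplus_v K_m$. Then $$Z(G)=Z(G_1\oplus_v K_m)=Z(G_1)+Z(K_m)-1 = Z(G_1)+m-2.$$
   Context: All graphs are finite, simple and connected. A cut vertex of $G$ is a vertex $v$ with $G-v$ disconnected. A block is a maximal connected subgraph without a cut vertex of its own. A clique tree is a connected graph each of whose blocks is a complete graph (clique). A pendant block is a block containing exactly one cut vertex of $G$. If $G-v$ consists of two disjoint parts $W_1,W_2$ and $G_i$ is the subgraph induced by $\{v\}\cup V(W_i)$, then $G$ is the vertex-sum $G_1\oplus_v G_2$. Zero forcing: each vertex is coloured blue or white; the colour-change rule says that if a blue vertex $u$ has exactly one white neighbour $w$, then $w$ becomes blue. A set $S\subseteq V(G)$ is a zero forcing set if colouring $S$ blue and the rest white, repeated application of the rule turns all vertices blue. $Z(G)$, the zero forcing number, is the minimum size of a zero forcing set; in particular $Z(K_m)=m-1$. *)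

(* Defs.v *)
(* A simple graph is a symmetric irreflexive relation e on a
   finType T; a graph G is given by a vertex set V : {set T} together with e,
   and the subgraph induced by S is (e, S). *)
From mathcomp Require Import all_boot.
Set Implicit Arguments. Unset Strict Implicit. Unset Printing Implicit Defensive.

Section Graphs.
Variable T : finType.
Variable e : rel T.

Definition rel_on (S : {set T}) : rel T :=
  fun x y => [&& x \in S, y \in S & e x y].

Definition connected_on (S : {set T}) : bool :=
  (S != set0) && [forall x in S, forall y in S, connect (rel_on S) x y].

Definition disconnected_on (S : {set T}) : bool :=
  [exists x in S, exists y in S, ~~ connect (rel_on S) x y].

Definition cut_vertex (V : {set T}) (v : T) : bool :=
  (v \in V) && disconnected_on (V :\ v).

Definition nonsep (S : {set T}) : bool :=
  connected_on S && [forall x, ~~ cut_vertex S x].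

Definition block (V B : {set T}) : bool :=
  [&& B \subset V, nonsep B &
      [forall B' : {set T}, ((B \proper B') && (B' \subset V)) ==> ~~ nonsep B']].

Definition is_clique (B : {set T}) : bool :=
  [forall x in B, forall y in B, (x != y) ==> e x y].

Definition clique_tree (V : {set T}) : bool :=
  connected_on V && [forall B : {set T}, block V B ==> is_clique B].

Definition pendant_block (V B : {set T}) : bool :=
  block V B && (#|[set x in B | cut_vertex V x]| == 1).

(* one application of the colour-change rule in the graph induced by S:
   the blue set X becomes Y = w |: X, where blue u has w as unique white nbr *)
Definition force (S : {set T}) : rel {set T} :=
  fun X Y => [exists u in X, exists w,
    (u \in S) && ([set y in S :\: X | e u y] == [set w]) && (Y == w |: X)].

Definition zero_forcing (S X : {set T}) : bool :=
  (X \subset S) && connect (force S) X S.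

Definition zf_size (S : {set T}) : pred nat :=
  fun n => [exists X : {set T}, (#|X| == n) && zero_forcing S X].

Lemma zf_size_ex (S : {set T}) : exists n, zf_size S n.
Proof.
exists #|S|; apply/existsP; exists S.
by rewrite eqxx /zero_forcing subxx connect0.
Qed.

Definition Z (S : {set T}) : nat := ex_minn (zf_size_ex S).

End Graphs.

(* Main.v *)
Require Import Defs.
From mathcomp Require Import all_boot.
From mathcomp Require Import zify.
From Stdlib Require Import Lia.
Set Implicit Arguments. Unset Strict Implicit. Unset Printing Implicit Defensive.

Lemma setU1_in (T : finType) (x : T) (A : {set T}) : x \in A -> x |: A = A.
Proof. by move=> xA; apply/setP=> y; rewrite !inE; case: eqP => // ->. Qed.

Lemma connect_sim (A A' : finType) (r : rel A) (r' : rel A') (f : A -> A')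
   (I : pred A) X Y :
  connect r X Y -> I X ->
  (forall a b, I a -> r a b -> I b /\ connect r' (f a) (f b)) ->
  connect r' (f X) (f Y).
Proof.
move=> /connectP [p pth ->] IX H.
elim: p X pth IX => [|b p IH] a //= /andP [rab pth] Ia.
have [Ib cab] := H a b Ia rab.
exact: connect_trans cab (IH b pth Ib).
Qed.

Lemma connect_inv (A : finType) (r : rel A) (I : pred A) X Y :
  connect r X Y -> I X -> (forall a b, I a -> r a b -> I b) -> I Y.
Proof.
move=> /connectP [p pth ->] IX H.
elim: p X pth IX => [|b p IH] a //= /andP [rab pth] Ia.
exact: IH b pth (H a b Ia rab).
Qed.

Section G.
Variable T : finType.
Variable e : rel T.

Lemma force_intro (S X : {set T}) u w : u \in X -> u \in S -> w \in S -> w \notin X -> e u w ->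
  (forall y, y \in S -> y \notin X -> e u y -> y = w) -> force e S X (w |: X).
Proof.
move=> uX uS wS wX euw H; apply/existsP; exists u; rewrite uX; apply/existsP; exists w.
rewrite uS eqxx andbT /=; apply/eqP/setP=> y; rewrite !inE.
apply/idP/idP.
  by case/andP=> /andP [yX yS] euy; apply/eqP; apply: H.
by move/eqP->; rewrite wX wS euw.
Qed.

Lemma force_elim (S X Y : {set T}) : force e S X Y -> exists u w, [/\ u \in X, u \in S, w \in S, w \notin X &
  [/\ e u w, (forall y, y \in S -> y \notin X -> e u y -> y = w) & Y = w |: X]].
Proof.
case/existsP=> u /andP [uX] /existsP [w] /andP [/andP [uS /eqP E] /eqP ->].
have : w \in [set y in S :\: X | e u y] by rewrite E set11.
rewrite !inE => /andP [/andP [wX wS] euw].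
exists u, w; split=> //; split=> // y yS yX euy.
have : y \in [set y in S :\: X | e u y] by rewrite !inE yX yS euy.
by rewrite E inE => /eqP.
Qed.

Lemma Zle (S X : {set T}) : zero_forcing e S X -> Z e S <= #|X|.
Proof.
move=> zf; rewrite /Z; case: ex_minnP => n _ H; apply: H.
by apply/existsP; exists X; rewrite eqxx.
Qed.

Lemma Zwit (S : {set T}) : exists X : {set T}, #|X| = Z e S /\ zero_forcing e S X.
Proof.
rewrite /Z; case: ex_minnP => n /existsP [X /andP [/eqP c zf]] _.
by exists X.
Qed.

Lemma two_white (S C D X : {set T}) :
  (forall x y, x \in D -> y \in D -> x != y -> e x y) ->
  C \subset S ->
  (forall u w, u \in S -> w \in C -> e u w -> u \in D) ->
  C \subset D ->
  zero_forcing e S X -> #|C :\: X| <= 1.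
Proof.
move=> hD hCS hN hCD /andP [XS cXS].
rewrite leqNgt; apply/negP => H.
have : 1 < #|C :\: S|.
  apply: (@connect_inv _ _ (fun Y : {set T} => 1 < #|C :\: Y|) _ _ cXS H).
  move=> a b Ia /force_elim [u [w [ua uS wS wa [euw uniq ->]]]].
  case wC: (w \in C); last first.
    have -> : C :\: (w |: a) = C :\: a.
      by apply/setP=> y; rewrite !inE; case: (y =P w) => [->|] //=; rewrite wC !andbF.
    exact: Ia.
  have uD : u \in D by apply: hN uS wC euw.
  have : C :\: a \subset [set w].
    apply/subsetP=> y; rewrite !inE => /andP [ya yC].
    have yS : y \in S by apply: (subsetP hCS).
    apply/eqP; apply: uniq => //; apply: hD => //; first exact: (subsetP hCD).
    by apply/eqP=> E; rewrite -E ua in ya.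
  by move/subset_leq_card; rewrite cards1 => /(leq_trans Ia); rewrite ltnn.
have -> : C :\: S = set0 by apply/setP=> y; rewrite !inE; case yC: (y \in C); rewrite ?andbF // (subsetP hCS).
by rewrite cards0.
Qed.

End G.

Section S.
Variable T : finType.
Variable e : rel T.
Hypothesis esym : symmetric e.
Hypothesis eirr : irreflexive e.

Lemma rel_on_sym (S : {set T}) : symmetric (rel_on e S).
Proof. by move=> x y; rewrite /rel_on esym andbCA. Qed.

Lemma conn_sym (S : {set T}) x y : connect (rel_on e S) x y -> connect (rel_on e S) y x.
Proof. by rewrite (sym_connect_sym (@rel_on_sym S)). Qed.

Lemma hub_conn (S : {set T}) h : h \in S -> (forall x, x \in S -> x != h -> e x h) ->
  forall x z, x \in S -> z \in S -> connect (rel_on e S) x z.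
Proof.
move=> hS H.
have c : forall x, x \in S -> connect (rel_on e S) x h.
  move=> x xS; case: (x =P h) => [->|/eqP xh]; first exact: connect0.
  by apply: connect1; rewrite /rel_on xS hS H.
move=> x z xS zS; exact: connect_trans (c x xS) (conn_sym (c z zS)).
Qed.

Lemma not_disc (S : {set T}) : (forall x z, x \in S -> z \in S -> connect (rel_on e S) x z) ->
  ~~ disconnected_on e S.
Proof.
move=> H; apply/existsP => [[x /andP [xS /existsP [z /andP [zS]]]]].
by rewrite H.
Qed.

Lemma nonsepI (S : {set T}) : S != set0 ->
  (forall x z, x \in S -> z \in S -> connect (rel_on e S) x z) ->
  (forall y, y \in S -> forall x z, x \in S :\ y -> z \in S :\ y -> connect (rel_on e (S :\ y)) x z) ->
  nonsep e S.
Proof.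
move=> S0 c1 c2; rewrite /nonsep /connected_on S0 /=.
apply/andP; split.
  by apply/forallP=> x; apply/implyP=> xS; apply/forallP=> z; apply/implyP=> zS; apply: c1.
apply/forallP=> y; rewrite /cut_vertex; case yS: (y \in S) => //=.
by apply: not_disc; apply: c2.
Qed.

Definition cliq (B : {set T}) := forall x y, x \in B -> y \in B -> x != y -> e x y.

Lemma extend_nonsep (B : {set T}) u b y : cliq B -> u \in B -> b \in B -> u != b ->
  y \notin B -> e y u -> e y b -> nonsep e (y |: B).
Proof.
move=> cB uB bB ub yB eyu eyb; apply: nonsepI.
- by apply/set0Pn; exists y; rewrite setU11.
- apply: (hub_conn (h := u)); first by rewrite setU1r.
  move=> x; rewrite !inE => /orP [/eqP -> _ //|xB xu]; exact: cB.
- move=> z0 _.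
  have [c [cB' cz eyc]] : exists c, [/\ c \in B, c != z0 & e y c].
    case: (u =P z0) => [uz|/eqP uz]; last by exists u.
    by exists b; split=> //; apply/eqP=> E; move: ub; rewrite uz E eqxx.
  apply: (hub_conn (h := c)); first by rewrite !inE cz cB' orbT.
  move=> x; rewrite !inE => /andP [_ /orP [/eqP -> _ //|xB xc]]; exact: cB.
Qed.

Lemma path_conn (S : {set T}) h t : path e h t -> h \in S -> {subset t <= S} ->
  forall a b, a \in h :: t -> b \in h :: t -> connect (rel_on e S) a b.
Proof.
move=> p hS tS.
have p' : path (rel_on e S) h t.
  have sr : {in mem S &, subrel e (rel_on e S)}.
    by move=> x z xS zS exz; rewrite /rel_on xS zS exz.
  have al : all (mem S) (h :: t) by rewrite /= hS; apply/allP=> x /tS.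
  exact: (sub_in_path sr al p).
move=> a b aP bP.
have ca := path_connect p' aP; have cb := path_connect p' bP.
exact: connect_trans (conn_sym ca) cb.
Qed.

Lemma cycle_nonsep (c : seq T) : c != [::] -> uniq c -> cycle e c -> nonsep e [set x in c].
Proof.
case: c => // h t _ U cy.
have pt : path e h t by move: cy; rewrite /= rcons_path => /andP [].
apply: nonsepI.
- by apply/set0Pn; exists h; rewrite inE mem_head.
- move=> x z xC zC; rewrite !inE in xC zC.
  apply: (path_conn pt) xC zC; first by rewrite inE mem_head.
  by move=> w wt; rewrite inE in_cons wt orbT.
- move=> z; rewrite inE => zc.
  case: (rot_to zc) => i s' E.
  have U' : uniq (z :: s') by rewrite -E rot_uniq.
  have cy' : cycle e (z :: s') by rewrite -E rot_cycle.
  have mem' : forall x, (x \in [set x in h :: t] :\ z) = (x \in s').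
    move=> x; rewrite in_setD1 in_set -(mem_rot i) E in_cons.
    case: (x =P z) => [->|] //=; by move: U' => /= /andP [/negPf ->].
  case: s' E U' cy' mem' => [|h' t'] E U' cy' mem'.
    by move=> x z'; rewrite mem'.
  have pt' : path e h' t'.
    by move: cy'; rewrite /= rcons_path => /andP [_ /andP []].
  move=> x z'; rewrite !mem' => xP zP; apply: path_conn pt' _ _ _ _ xP zP.
    by rewrite mem' mem_head.
  by move=> w wt; rewrite mem' in_cons wt orbT.
Qed.

Lemma block_exists (V C : {set T}) : C \subset V -> nonsep e C ->
  exists B', block e V B' /\ C \subset B'.
Proof.
move=> CV nC.
pose P := fun B' : {set T} => [&& C \subset B', B' \subset V & nonsep e B'].
have PC : P C by rewrite /P subxx CV nC.
case: (arg_maxnP (fun B' : {set T} => #|B'|) PC) => B' /and3P [CB BV nB] Hmax.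
exists B'; split=> //; rewrite /block BV nB /=.
apply/forallP=> B2; apply/implyP=> /andP [pr B2V]; apply/negP=> nB2.
have : P B2 by rewrite /P B2V nB2 (subset_trans CB (proper_sub pr)).
move/Hmax=> /= Hle; move: (proper_card pr); by rewrite ltnNge Hle.
Qed.

End S.

Lemma path_in (T : finType) (e : rel T) (S : {set T}) x p :
  path (rel_on e S) x p -> {subset p <= S}.
Proof.
elim: p x => [|a p IH] x //= /andP [r pth] z; rewrite in_cons => /orP [/eqP ->|zp].
  by move: r; rewrite /rel_on => /and3P [].
exact: IH pth z zp.
Qed.

Section Main.
Variable T : finType.
Variable e : rel T.
Hypothesis esym : symmetric e.
Hypothesis eirr : irreflexive e.
Variables (V B : {set T}) (v : T) (m : nat).
Hypothesis hcl : forall B', block e V B' -> is_clique e B'.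
Hypothesis hB : pendant_block e V B.
Hypothesis hvB : v \in B.
Hypothesis hvc : cut_vertex e V v.
Hypothesis hm : #|B| = m.
Hypothesis h3 : 3 <= m.

Lemma clq_of (C : {set T}) : is_clique e C -> cliq e C.
Proof.
move=> H x y xC yC xy.
by move: H => /forallP/(_ x)/implyP/(_ xC)/forallP/(_ y)/implyP/(_ yC)/implyP/(_ xy).
Qed.

Lemma blockB : block e V B. Proof. by case/andP: hB. Qed.
Lemma BV : B \subset V. Proof. by case/and3P: blockB. Qed.
Lemma cB : cliq e B. Proof. exact: clq_of (hcl blockB). Qed.

Lemma noncut u : u \in B -> u != v -> ~~ cut_vertex e V u.
Proof.
move=> uB uv; apply/negP=> cu.
case/andP: hB => _ /cards1P [a Ea].
have : u \in [set x in B | cut_vertex e V x] by rewrite inE uB cu.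
have : v \in [set x in B | cut_vertex e V x].
  by rewrite inE hvB hvc.
by rewrite Ea !inE => /eqP va /eqP ua; move: uv; rewrite va ua eqxx.
Qed.

Lemma keyF u y : u \in B -> u != v -> y \in V -> e u y -> y \in B.
Proof.
move=> uB uv yV euy; apply/negPn/negP=> yB.
have uV : u \in V by apply: (subsetP BV).
have nc := noncut uB uv; rewrite /cut_vertex uV /= in nc.
have yu : y != u by apply/eqP=> E; move: euy; rewrite E eirr.
have vV : v \in V by apply: (subsetP BV).
have c : connect (rel_on e (V :\ u)) y v.
  apply/negPn/negP=> nc'; move/negP: nc; apply; apply/existsP; exists y.
  rewrite in_setD1 yu yV /=; apply/existsP; exists v.
  by rewrite in_setD1 vV eq_sym uv /= nc'.
case/connectP: c => p pth vE; move: vE.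
case: (shortenP pth) => p' pth' U _ vE.
have p'S := path_in pth'.
have ypV : forall x, x \in y :: p' -> x \in V.
  move=> x; rewrite in_cons => /orP [/eqP -> //|/p'S]; by rewrite in_setD1 => /andP [].
have unotin : u \notin y :: p'.
  rewrite in_cons negb_or eq_sym yu /=; apply/negP=> /p'S; by rewrite in_setD1 eqxx.
have ecy : cycle e (u :: y :: p').
  rewrite /= rcons_path euy /=; apply/andP; split.
    by apply: (sub_path _ pth') => a b; rewrite /rel_on => /and3P [].
  by rewrite -vE; apply: cB => //; rewrite eq_sym.
have Uc : uniq (u :: y :: p') by rewrite cons_uniq unotin U.
have nC := cycle_nonsep esym (c := u :: y :: p') isT Uc ecy.
have CV : [set x in u :: y :: p'] \subset V.
  apply/subsetP=> x; rewrite inE in_cons => /orP [/eqP -> //|]; exact: ypV.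
case: (block_exists CV nC) => B' [bB' CB'].
have cB' := clq_of (hcl bB').
have inB' : forall x, x \in u :: y :: p' -> x \in B'.
  by move=> x xc; apply: (subsetP CB'); rewrite inE.
have vc : v \in u :: y :: p'.
  by rewrite vE in_cons mem_last orbT.
have yv : y != v by apply/eqP=> E; move: yB; rewrite E hvB.
have eyv : e y v by apply: cB' => //; apply: inB'; rewrite ?vc // !in_cons eqxx orbT.
have eyu : e y u by rewrite esym.
have nB := extend_nonsep esym cB uB hvB uv yB eyu eyv.
case/and3P: blockB => _ _ /forallP/(_ (y |: B))/implyP H.
have : ~~ nonsep e (y |: B).
  by apply: H; rewrite properUr ?sub1set // subUset sub1set yV BV.
by rewrite nB.
Qed.

Local Notation W := (B :\ v).
Local Notation V1 := (V :\: (B :\ v)).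

Lemma hN u w : u \in V -> w \in W -> e u w -> u \in B.
Proof.
move=> uV; rewrite in_setD1 => /andP [wv wB] euw.
by apply: (keyF wB wv uV); rewrite esym.
Qed.

Lemma Fw u y : u \in W -> y \in V -> e u y -> y \in B.
Proof. by rewrite in_setD1 => /andP [uv uB]; apply: keyF. Qed.

Lemma cardW : #|W| = m.-1.
Proof. by rewrite -hm (cardsD1 v B) hvB. Qed.

Lemma vV : v \in V. Proof. exact: (subsetP BV). Qed.
Lemma vV1 : v \in V1. Proof. by rewrite !inE eqxx vV. Qed.
Lemma WV : W \subset V.
Proof. by apply/subsetP=> x; rewrite in_setD1 => /andP [_ /(subsetP BV)]. Qed.

Lemma ZB : Z e B = m.-1.
Proof.
have [w wW] : exists w, w \in W.
  apply/set0Pn; rewrite -card_gt0 cardW; lia.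
move: (wW); rewrite in_setD1 => /andP [wv wB].
apply/eqP; rewrite eqn_leq; apply/andP; split.
  have -> : m.-1 = #|B :\ w| by rewrite -hm (cardsD1 w B) wB.
  apply: Zle; rewrite /zero_forcing subD1set /=.
  apply: connect1.
  have E : w |: (B :\ w) = B by rewrite setD1K.
  have H := (@force_intro _ e B (B :\ w) v w).
  rewrite E in H; apply: H.
  - by rewrite in_setD1 eq_sym wv.
  - exact: hvB.
  - exact: wB.
  - by rewrite in_setD1 eqxx.
  - by apply: cB; rewrite // eq_sym.
  - by move=> y yB; rewrite in_setD1 yB andbT negbK => /eqP.
have [X [<- zf]] := Zwit e B.
have H2 := two_white cB (subxx B) (fun u w uB _ _ => uB) (subxx B) zf.
case/andP: zf => XB _.
have H3 := cardsID X B; rewrite (setIidPr XB) in H3.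
rewrite -hm -H3. move: H2; move: (#|B :\: X|) (#|X|) => a b. lia.
Qed.

Definition Pm (Y : {set T}) : {set T} :=
  (Y :&: V1) :|: (if W \subset Y then [set v] else set0).

Lemma Pm_v (Y : {set T}) : v \in Y -> Pm Y = Y :&: V1.
Proof.
move=> vY; rewrite /Pm; case: ifP => _; last by rewrite setU0.
by apply/setUidPl; rewrite sub1set inE vY vV1.
Qed.

Lemma Pm_notW (Y : {set T}) w : w \notin W -> w \in V -> Pm (w |: Y) = w |: Pm Y.
Proof.
move=> wW wV.
have wV1 : w \in V1 by rewrite inE wW wV.
have E : (W \subset w |: Y) = (W \subset Y).
  apply/idP/idP => H; apply/subsetP=> x xW; last by rewrite setU1r // (subsetP H).
  by move: (subsetP H x xW); rewrite !inE; case: (x =P w) => [E|] //=; move: xW; rewrite E (negPf wW).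
rewrite /Pm E; apply/setP=> x; rewrite !inE; case: (x =P w) => [->|] //=.
by rewrite !inE in wV1; rewrite wV1.
Qed.

Lemma Pm_step (Y Y' : {set T}) : Y \subset V -> force e V Y Y' ->
  Y' \subset V /\ connect (force e V1) (Pm Y) (Pm Y').
Proof.
move=> YV /force_elim [u [w [uY uV wV wY [euw uni ->]]]].
split; first by rewrite subUset sub1set wV YV.
case wW: (w \in W).
  have vY : v \in Y.
    have uB : u \in B by apply: hN uV wW euw.
    case: (u =P v) => [<- //|/eqP uv].
    apply/negPn/negP=> vY.
    have := uni v vV vY (cB uB hvB uv); move=> E; move: wW; rewrite -E in_setD1 eqxx.
    done.
  rewrite !Pm_v ?vY ?setU1r //.
  have -> : (w |: Y) :&: V1 = Y :&: V1.
    apply/setP=> x; rewrite !inE; case: (x =P w) => [->|] //=.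
    by move: wW; rewrite in_setD1 => /andP [-> ->]; rewrite andbF.
  exact: connect0.
rewrite Pm_notW ?wW //.
case wP: (w \in Pm Y); first by rewrite setU1_in //; exact: connect0.
apply: connect1.
have uW : u \notin W.
  apply/negP=> uW.
  have wB := Fw uW wV euw.
  have wv : w = v.
    apply/eqP; apply/negPn/negP=> wv; move: wW; rewrite in_setD1 wv wB.
    done.
  have WY : W \subset Y.
    apply/subsetP=> x xW; case: (x =P u) => [-> //|/eqP xu].
    apply/negPn/negP=> xY.
    have xV : x \in V by apply: (subsetP WV).
    have xB : x \in B by move: xW; rewrite in_setD1 => /andP [].
    have uB : u \in B by move: uW; rewrite in_setD1 => /andP [].
    have ux : u != x by rewrite eq_sym.
    have := uni x xV xY (cB uB xB ux).
    by move=> xw; move: xW; rewrite xw wv in_setD1 eqxx.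
  by move: wP; rewrite /Pm WY wv !inE eqxx orbT.
have uV1 : u \in V1 by rewrite inE uW uV.
have wV1 : w \in V1 by rewrite inE wW wV.
apply: (force_intro (u := u)) => //.
- by rewrite /Pm in_setU in_setI uY uV1.
- by rewrite wP.
- move=> y yV1 yP euy; apply: uni => //.
  + by move: yV1; rewrite inE => /andP [].
  + by apply/negP=> yY; move: yP; rewrite /Pm in_setU in_setI yY yV1.
Qed.
Lemma Pm_V : Pm V = V1.
Proof.
rewrite /Pm WV (setIidPr (subsetDl V W)).
by apply/setUidPl; rewrite sub1set vV1.
Qed.

Lemma ZV_lower : Z e V1 + m - 2 <= Z e V.
Proof.
have [X [<- zf]] := Zwit e V.
have tw := two_white cB WV (fun u w uV wW euw => hN uV wW euw) (subD1set B v) zf.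
case/andP: zf => XV cX.
have zP : zero_forcing e V1 (Pm X).
  apply/andP; split.
    rewrite /Pm subUset subsetIr /=; case: ifP => _; first by rewrite sub1set vV1.
    exact: sub0set.
  have := (connect_sim (f := Pm) (I := fun Y => Y \subset V) cX XV (fun a b Ia r => Pm_step Ia r)).
  by rewrite Pm_V.
have L := Zle zP.
have c1 : #|Pm X| <= #|X :&: V1| + (W \subset X).
  rewrite /Pm cardsU; case: ifP => _; rewrite ?cards1 ?cards0; lia.
have c2 := cardsID W X.
have E : X :\: W = X :&: V1.
  apply/setP=> x; rewrite !inE; case xX: (x \in X); rewrite ?andbF //= andbT.
  by rewrite (subsetP XV x xX) andbT.
rewrite E in c2.
have c3 := cardsID X W; rewrite setIC cardW in c3.
case WX: (W \subset X) in c1.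
  have c4 : #|X :&: W| = m.-1 by rewrite (setIidPr WX) cardW.
  lia.
lia.
Qed.

Section Up.
Variables w0 w1 : T.
Hypothesis w0W : w0 \in W.
Hypothesis w1W : w1 \in W.
Hypothesis w10 : w1 != w0.

Definition Q (Y : {set T}) : {set T} := Y :|: [set x in W | (x != w0) || (v \in Y)].

Lemma V1V : V1 \subset V. Proof. exact: subsetDl. Qed.

Lemma fill (Z0 : {set T}) : Z0 \subset V -> v \in Z0 -> W :\ w0 \subset Z0 ->
  connect (force e V) Z0 (w0 |: Z0).
Proof.
move=> ZV vZ WZ.
case w0Z: (w0 \in Z0); first by rewrite setU1_in //; exact: connect0.
apply: connect1; apply: (force_intro (u := w1)).
- by apply: (subsetP WZ); rewrite in_setD1 w10.
- exact: (subsetP WV).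
- exact: (subsetP WV).
- by rewrite w0Z.
- move: w0W w1W; rewrite !in_setD1 => /andP [_ w0B] /andP [_ w1B]; exact: cB.
- move=> y yV yZ ey.
  have yB := Fw w1W yV ey.
  have yv : y != v by apply/eqP=> E; move: yZ; rewrite E vZ.
  apply/eqP; apply/negPn/negP=> yw0; move: yZ; rewrite (subsetP WZ) //.
  by rewrite !in_setD1 yw0 yv yB.
Qed.

Lemma Qstep1 (Y1 : {set T}) u w : u \in Y1 -> u \in V1 -> w \in V1 -> w \notin Y1 -> e u w ->
  (forall y, y \in V1 -> y \notin Y1 -> e u y -> y = w) ->
  force e V (Q Y1) (w |: Q Y1).
Proof.
move=> uY uV1 wV1 wY euw uni.
apply: (force_intro (u := u)).
- by rewrite /Q in_setU uY.
- exact: (subsetP V1V).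
- exact: (subsetP V1V).
- move: wV1; rewrite /Q in_setU in_setD => /andP [wW _].
  by rewrite (negPf wY) /= in_set (negPf wW).
- exact: euw.
- move=> y yV yQ euy.
  case yW: (y \in W).
    have uB := hN (subsetP V1V _ uV1) yW euy.
    have uv : u = v.
      apply/eqP; apply/negPn/negP=> uv; move: uV1; rewrite in_setD in_setD1 uv uB.
      done.
    by move: yQ; rewrite /Q in_setU in_set yW -uv uY orbT orbT.
  apply: uni => //.
  - by rewrite in_setD yW yV.
  - by apply/negP=> yY; move: yQ; rewrite /Q in_setU yY.
Qed.

Lemma QV : Q V1 = V.
Proof.
apply/setP=> x; rewrite /Q in_setU in_set vV1 orbT andbT.
case xW: (x \in W); first by rewrite orbT (subsetP WV).
by rewrite orbF in_setD xW.
Qed.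

Lemma QsubV (Y1 : {set T}) : Y1 \subset V1 -> Q Y1 \subset V.
Proof.
move=> YV1; rewrite /Q subUset (subset_trans YV1 V1V) /=.
by apply/subsetP=> x; rewrite in_set => /andP [/(subsetP WV)].
Qed.

Lemma WQ (Y1 : {set T}) : W :\ w0 \subset Q Y1.
Proof.
apply/subsetP=> x; rewrite in_setD1 => /andP [xw xW].
by rewrite /Q in_setU in_set xW xw orbT.
Qed.

Lemma Q_step (Y Y' : {set T}) : Y \subset V1 -> force e V1 Y Y' ->
  Y' \subset V1 /\ connect (force e V) (Q Y) (Q Y').
Proof.
move=> YV1 /force_elim [u [w [uY uV1 wV1 wY [euw uni ->]]]].
split; first by rewrite subUset sub1set wV1 YV1.
have F1 := Qstep1 uY uV1 wV1 wY euw uni.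
case: (w =P v) => [wv|/eqP wv].
  have E : Q (w |: Y) = w0 |: (w |: Q Y).
    apply/setP=> x; rewrite /Q !in_setU !in_set1 !in_set wv eqxx orbT /= andbT.
    case: (x =P w0) => [->|_] /=; first by rewrite -in_setD w0W !orbT.
    by rewrite andbT -orbA.
  rewrite E; apply: connect_trans (connect1 F1) _.
  apply: fill; last first.
  - exact: subset_trans (WQ Y) (subsetUr _ _).
  - by rewrite -wv setU11.
  - by rewrite subUset sub1set (subsetP V1V) // QsubV.
have E : Q (w |: Y) = w |: Q Y.
  apply/setP=> x; rewrite /Q !in_setU !in_set1 !in_set (eq_sym v w) (negPf wv) /=.
  by rewrite -orbA.
by rewrite E; apply: connect1.
Qed.

Lemma ZV_upper_aux : Z e V <= Z e V1 + m - 2.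
Proof.
have [X1 [<- zf]] := Zwit e V1.
case/andP: zf => X1V1 cX1.
have XV : X1 :|: (W :\ w0) \subset V.
  by rewrite subUset (subset_trans X1V1 V1V) (subset_trans (subD1set W w0) WV).
have init : connect (force e V) (X1 :|: (W :\ w0)) (Q X1).
  case vX1: (v \in X1).
    have -> : Q X1 = w0 |: (X1 :|: (W :\ w0)).
      apply/setP=> x; rewrite /Q !in_setU in_set1 in_setD1 in_set vX1 orbT andbT.
      case: (x =P w0) => [->|] /=; first by rewrite w0W orbT.
      by [].
    apply: fill XV _ _; first by rewrite in_setU vX1.
    exact: subsetUr.
  have -> : Q X1 = X1 :|: (W :\ w0).
    apply/setP=> x; rewrite /Q !in_setU in_setD1 in_set vX1 orbF andbC.
    by [].
  exact: connect0.
have main := connect_sim (f := Q) (I := fun Y => Y \subset V1) cX1 X1V1 (fun a b Ia r => Q_step Ia r).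
rewrite QV in main.
have zX : zero_forcing e V (X1 :|: (W :\ w0)).
  by rewrite /zero_forcing XV (connect_trans init main).
have L := Zle zX.
have c1 := cardsU X1 (W :\ w0).
have c2 := cardsD1 w0 W; rewrite w0W cardW in c2.
lia.
Qed.

End Up.

Lemma ZV_upper : Z e V <= Z e V1 + m - 2.
Proof.
have [w0 w0W] : exists w, w \in W.
  apply/set0Pn; rewrite -card_gt0 cardW; lia.
have [w1 w1W] : exists w, w \in W :\ w0.
  apply/set0Pn; rewrite -card_gt0; have := cardsD1 w0 W; rewrite w0W cardW; lia.
move: w1W; rewrite in_setD1 => /andP [w10 w1W].
exact: (ZV_upper_aux w0W w1W w10).
Qed.

End Main.
Theorem corollary2p5 (T : finType) (e : rel T) (V : {set T})
    (v : T) (B : {set T}) (m : nat) :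
  symmetric e -> irreflexive e ->
  clique_tree e V ->
  (forall B' : {set T}, block e V B' -> 3 <= #|B'|) ->
  cut_vertex e V v ->
  pendant_block e V B -> v \in B ->
  #|B| = m -> 3 <= m ->
  let V1 := V :\: (B :\ v) in
  Z e V = Z e V1 + Z e B - 1 /\ Z e V = Z e V1 + m - 2.
Proof.
move=> esym eirr ct _ hvc hpend hvB hm h3 V1.
have hcl : forall B', block e V B' -> is_clique e B'.
  by move=> B' bB'; case/andP: ct => _ /forallP/(_ B')/implyP; apply.
have zb := ZB hcl hpend hvB hvc hm h3.
have lo := ZV_lower esym eirr hcl hpend hvB hvc hm h3.
have up := ZV_upper esym eirr hcl hpend hvB hvc hm h3.
rewrite /V1 zb; lia.
Qed.
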